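(* If a set of tasks $\mathcal{S}\subseteq\mathcal{T}$ admits a feasible schedule on $C$ machines, then $\mu_m^C(\mathcal{S})\le C\cdot\tau_m$ for all $m\in\{0,1,\dots,L\}$.
   Context: Model: $C$ identical machines; finite task set $\mathcal{T}$. Task $T_i$ has workload $D_i\in\mathbb{Z}^+$, deadline $d_i\in\mathbb{Z}^+$, parallelism bound $k_i\in\mathbb{Z}^+$. Slots are $1,\dots,d$ with $d=\max_i d_i$. A feasible schedule of $\mathcal{S}$ on $C$ machines is a family of functions $y_i:\{1,\dots,d_i\}\to\{0,\dots,k_i\}$ ($T_i\in\mathcal{S}$) with $\sum_{t\le d_i}y_i(t)\ge D_i$ for all $T_i\in\mathcal{S}$ and $\sum_{T_i\in\mathcal{S}}y_i(t)\le C$ for every slot $t$. Let $len_j=\lceil D_j/k_j\rceil$; let $0=\tau_0<\tau_1<\dots<\tau_L=d$ where $\{\tau_1,\dots,\tau_L\}$ is the set of distinct deadlines of tasks in $\mathcal{T}$. For $m\in\{0,\dots,L\}$, $\lambda_m(\mathcal{S})=\sum_{T_j\in\mathcal{S},\,d_j>\tau_{L-m}} c_j^{(m)}$ with $c_j^{(m)}=D_j$ if $len_j\le d_j-\tau_{L-m}$ and $c_j^{(m)}=k_j(d_j-\tau_{L-m})$ otherwise. $\lambda_0^C(\mathcal{S})=0$ and $\lambda_m^C(\mathcal{S})=\lambda_{m-1}^C(\mathcal{S})+\min\{\lambda_m(\mathcal{S})-\lambda_{m-1}^C(\mathcal{S}),\ C(\tau_{L-m+1}-\tau_{L-m})\}$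 for $m\ge1$. Finally $\mu_m^C(\mathcal{S})=\sum_{T_j\in\mathcal{S}}D_j-\lambda_{L-m}^C(\mathcal{S})$. The condition in the claim is called the boundary condition. *)

(* Defs.v *)
From mathcomp Require Import all_boot all_order all_algebra.
Set Implicit Arguments. Unset Strict Implicit. Unset Printing Implicit Defensive.
Import Order.TTheory GRing.Theory Num.Theory.

(* Tasks are indexed by 'I_n; task i has workload D i, deadline d i,
   parallelism bound k i.  A subset of tasks is S : {set 'I_n}. *)
Section Sched.
Variables (n C : nat) (D d k : 'I_n -> nat).

(* Feasible schedule of S on C machines: y i t is the number of machines given
   to task i in slot t (only slots 1..d i matter for task i). *)
Definition feasible (S : {set 'I_n}) : Prop :=
  exists y : 'I_n -> nat -> nat,
    [/\ forall i, i \in S -> forall t, 1 <= t <= d i -> y i t <= k i,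
        forall i, i \in S -> D i <= \sum_(1 <= t < (d i).+1) y i t
      & forall t, 1 <= t <= \max_(i : 'I_n) d i ->
          \sum_(i in S | t <= d i) y i t <= C].

Definition taus : seq nat := sort leq (undup [seq d i | i <- enum 'I_n]).
Definition L : nat := size taus.
(* tau_0 = 0, tau_m = m-th smallest distinct deadline *)
Definition tau (m : nat) : nat := if m is m'.+1 then nth 0 taus m' else 0.

(* len_j = ceil (D_j / k_j) *)
Definition len (j : 'I_n) : nat := (D j + k j - 1) %/ k j.

Definition cj (m : nat) (j : 'I_n) : nat :=
  if len j <= d j - tau (L - m) then D j else k j * (d j - tau (L - m)).

Definition lambda (S : {set 'I_n}) (m : nat) : int :=
  (\sum_(j in S | tau (L - m) < d j) cj m j)%:Z.

Fixpoint lambdaC (S : {set 'I_n}) (m : nat) : int :=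
  match m with
  | 0 => 0
  | m'.+1 => (lambdaC S m' +
      Num.min (lambda S m'.+1 - lambdaC S m')
              (C * (tau (L - m') - tau (L - m'.+1)))%:Z)%R
  end.

Definition mu (S : {set 'I_n}) (m : nat) : int :=
  ((\sum_(j in S) D j)%:Z - lambdaC S (L - m))%R.
End Sched.

(* Main.v *)
Require Import Defs.
From mathcomp Require Import all_boot all_order all_algebra.
From mathcomp Require Import zify.
Import Order.TTheory GRing.Theory Num.Theory.

Section Aux.
Variables (n C : nat) (D d k : 'I_n -> nat) (y : 'I_n -> nat -> nat) (S : {set 'I_n}).
Hypothesis hy1 : forall i, i \in S -> forall t, 1 <= t <= d i -> y i t <= k i.
Hypothesis hy2 : forall i, i \in S -> D i <= \sum_(1 <= t < (d i).+1) y i t.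
Hypothesis hy3 : forall t, 1 <= t <= \max_(i : 'I_n) d i ->
          \sum_(i in S | t <= d i) y i t <= C.

Definition P th j := \sum_(1 <= t < th.+1 | t <= d j) y j t.

Lemma P_split th th' j : th <= th' ->
  P th' j = P th j + \sum_(th.+1 <= t < th'.+1 | t <= d j) y j t.
Proof. by move=> h; rewrite /P (big_cat_nat _ (n:=th.+1)). Qed.

Lemma P_d j : j \in S -> D j <= P (d j) j.
Proof.
move=> jS; have h2 := @hy2 j jS; apply: (leq_trans h2); rewrite /P [X in _ <= X]big_mkcond /=.
apply: eq_leq; apply: eq_big_nat => t /andP[_]; rewrite ltnS => ->; done.
Qed.

Definition U th := \sum_(j in S) (D j - P th j).

Lemma U0 : U 0 = \sum_(j in S) D j.
Proof. by apply: eq_bigr => j _; rewrite /P big_geq // subn0. Qed.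

Lemma U_step th th' : th <= th' -> U th <= U th' + C * (th' - th).
Proof.
move=> h.
apply: (@leq_trans (\sum_(j in S) ((D j - P th' j) +
    \sum_(th.+1 <= t < th'.+1 | t <= d j) y j t))).
  apply: leq_sum => j _; rewrite (@P_split th th' j h); lia.
rewrite big_split /= leq_add2l.
under eq_bigr do rewrite big_mkcond /=.
rewrite exchange_big /=.
apply: (@leq_trans (\sum_(th.+1 <= t < th'.+1) C)); last first.
  by rewrite sum_nat_const_nat mulnC subSS.
rewrite big_nat [X in _ <= X]big_nat.
apply: leq_sum => t /andP[ht1 _].
rewrite -big_mkcondr.
case: (leqP t (\max_(i : 'I_n) d i)) => ht.
  by apply: hy3; rewrite ht andbT; apply: leq_trans ht1.
rewrite big_pred0 // => i; apply/negbTE/negP => /andP[_ hi].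
by move: (leq_trans hi (leq_bigmax (F:=d) i)); rewrite leqNgt ht.
Qed.

Lemma u_zero th j : j \in S -> d j <= th -> D j - P th j = 0.
Proof.
move=> jS h; apply/eqP; rewrite subn_eq0; apply: (leq_trans (@P_d j jS)).
by rewrite (@P_split (d j) th j h) leq_addr.
Qed.

Lemma u_bound th j : j \in S -> th < d j -> D j - P th j <= k j * (d j - th).
Proof.
move=> jS h; rewrite leq_subLR. apply: (leq_trans (@P_d j jS)).
rewrite (@P_split th (d j) j (ltnW h)) leq_add2l.
apply: (@leq_trans (\sum_(th.+1 <= t < (d j).+1) k j)); last first.
  by rewrite sum_nat_const_nat subSS mulnC.
rewrite [X in X <= _]big_mkcond /= big_nat [X in _ <= X]big_nat.
apply: leq_sum => t /andP[h1 h2]; case: ifP => // _; apply: hy1 => //.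
by rewrite ltnS in h2; rewrite h2 andbT; apply: leq_trans h1.
Qed.

Lemma U_lambda th :
  U th <= \sum_(j in S | th < d j)
           (if len D k j <= d j - th then D j else k j * (d j - th)).
Proof.
rewrite /U (bigID (fun j => th < d j)) /= [X in _ + X]big1 ?addn0.
  apply: leq_sum => j /andP[jS h].
  case: ifP => _; first exact: leq_subr.
  exact: u_bound.
by move=> j /andP[jS]; rewrite -leqNgt => h; apply: u_zero.
Qed.

Lemma U_max th : (forall j, d j <= th) -> U th = 0.
Proof. by move=> h; apply: big1 => j jS; apply: u_zero. Qed.
End Aux.

Section Tau.
Variables (n : nat) (d : 'I_n -> nat).

Lemma taus_sorted : sorted leq (taus d).
Proof. exact: (sort_sorted leq_total). Qed.

Lemma tau_mono a b : a <= b -> b <= L d -> tau d a <= tau d b.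
Proof.
case: a => [|a] //; case: b => [|b] // hab hb.
rewrite /L in hb.
rewrite /tau; apply: (sorted_leq_nth leq_trans leqnn 0 taus_sorted); rewrite ?inE; lia.
Qed.

Lemma tau_max j : d j <= tau d (L d).
Proof.
have hj : d j \in taus d by rewrite /taus mem_sort mem_undup; apply: map_f; rewrite mem_enum.
have hi := nth_index 0 hj.
have hs : index (d j) (taus d) < size (taus d) by rewrite index_mem.
rewrite /L; move: hs hi; case E: (size (taus d)) => [|s] // hs hi.
rewrite -hi /tau; apply: (sorted_leq_nth leq_trans leqnn 0 taus_sorted).
- by rewrite inE E.
- by rewrite inE E.
- by rewrite -ltnS.
Qed.
End Tau.


Theorem lemma2 (n C : nat) (D d k : 'I_n -> nat)
  (hD : forall i, 0 < D i) (hd : forall i, 0 < d i) (hk : forall i, 0 < k i)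
  (S : {set 'I_n}) :
  feasible C D d k S ->
  forall m : nat, m <= L d ->
    (mu C D d k S m <= (C * tau d m)%:Z)%R.
Proof.
case=> y [hy1 hy2 hy3] m hm.
have claim : forall m', m' <= L d ->
    ((U n D d y S (tau d (L d - m')))%:Z <= lambdaC C D d k S m')%R.
  elim=> [|m' IH] hm'.
    rewrite subn0 (@U_max n D d y S) //.
    move=> j; exact: tau_max.
  have hth : tau d (L d - m'.+1) <= tau d (L d - m').
    apply: tau_mono; lia.
  have A := @U_step n C D d y S hy3 _ _ hth.
  have B := @U_lambda n D d k y S hy1 hy2 (tau d (L d - m'.+1)).
  have IH' := IH (ltnW hm').
  rewrite /= /lambda /cj.
  set u := U _ _ _ _ _ _ in A B *.
  set u' := U _ _ _ _ _ _ in A IH'.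
  set lam := \sum_(j in S | _) _ in B *.
  set lc := lambdaC _ _ _ _ _ _ in IH' *.
  set g := (tau d (L d - m') - tau d (L d - m'.+1)) in A *.
  rewrite -lerBlDl le_min; apply/andP; split.
    rewrite lerD2r; by rewrite lez_nat.
  rewrite lerBlDl.
  apply: (le_trans (y := Posz (u' + C * g))); first by rewrite lez_nat.
  by rewrite PoszD lerD2r.
rewrite /mu.
have := claim (L d - m) (leq_subr _ _).
rewrite subKn //.
have := @U_step n C D d y S hy3 0 (tau d m) (leq0n _).
rewrite (@U0 n D d y S) subn0 => h1 h2.
rewrite lerBlDl; apply: (le_trans (y := Posz (U n D d y S (tau d m) + C * tau d m))).
  by rewrite lez_nat.
by rewrite PoszD lerD2r.
Qed.
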